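(* Let $(X,T)$ be a linearly recurrent minimal Cantor system with a sequence of CKR partitions satisfying (KR1)–(KR6) and (LR), and $\mu$ its unique invariant probability measure. There exist $c\ge0$ and $\beta\in[0,1)$ such that for all $n,k\in\mathbb N$ with $k\le n$, $$\sup_{1\le t\le C(n-k),\,1\le\bar t\le C(n)}\big|\mu[\tau_n=\bar t\mid\tau_{n-k}=t]-\mu[\tau_n=\bar t]\big|\le c\beta^k.$$
   Context: Minimal Cantor system, CKR partitions $\mathcal P(n)=\{T^{-j}B_k(n):1\le k\le C(n),0\le j<h_k(n)\}$ with $\mathcal P(0)$ trivial, roof $B(n)=\bigcup_kB_k(n)$, towers $\mathcal T_k(n)=\bigcup_{0\le j<h_k(n)}T^{-j}B_k(n)$, conditions (KR1) $B(n+1)\subseteq B(n)$; (KR2) $\mathcal P(n+1)$ refines $\mathcal P(n)$; (KR3) $\bigcap_nB(n)$ is one point; (KR4) the partitions generate the topology; (KR5) for all $n\ge1$, $k\le C(n-1)$, $l\le C(n)$ some $0\le j<h_l(n)$ has $T^{-j}B_l(n)\subseteq B_k(n-1)$; (KR6) $B(n)\subseteq B_1(n-1)$; (LR) $h_l(n)\le Lh_k(n-1)$ for a constant $L$. $\tau_n(x)=k$ iff $x\in\mathcal T_k(n)$; $(\tau_n)$ is a non-stationary Markov chain under $\mu$. *)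

(* Defs.v *)
From Stdlib Require Import Reals Arith.
Open Scope R_scope.

Definition set (X : Type) := X -> Prop.

Definition is_topology {X : Type} (op : set X -> Prop) : Prop :=
  op (fun _ => True) /\ op (fun _ => False) /\
  (forall U V, op U -> op V -> op (fun x => U x /\ V x)) /\
  (forall F : set X -> Prop, (forall U, F U -> op U) ->
     op (fun x => exists U, F U /\ U x)).

Definition is_closed {X : Type} (op : set X -> Prop) (A : set X) : Prop :=
  op (fun x => ~ A x).

Definition is_clopen {X : Type} (op : set X -> Prop) (A : set X) : Prop :=
  op A /\ is_closed op A.

Definition compact_space {X : Type} (op : set X -> Prop) : Prop :=
  forall (I : Type) (U : I -> set X),
    (forall i, op (U i)) -> (forall x, exists i, U i x) ->
    exists l : list I, forall x, exists i, List.In i l /\ U i x.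

Definition hausdorff {X : Type} (op : set X -> Prop) : Prop :=
  forall x y : X, x <> y -> exists U V, op U /\ op V /\ U x /\ V y /\
    (forall z, U z -> V z -> False).

Definition no_isolated_points {X : Type} (op : set X -> Prop) : Prop :=
  forall x : X, ~ op (fun y => y = x).

Definition countable_clopen_base {X : Type} (op : set X -> Prop) : Prop :=
  exists W : nat -> set X, (forall m, is_clopen op (W m)) /\
    forall U x, op U -> U x -> exists m, W m x /\ (forall y, W m y -> U y).

(* Cantor space: nonempty, compact, Hausdorff, second countable (hence
   metrizable), zero-dimensional (hence totally disconnected), perfect. *)
Definition cantor_space {X : Type} (op : set X -> Prop) : Prop :=
  is_topology op /\ (exists x : X, True) /\ compact_space op /\ hausdorff op /\
  countable_clopen_base op /\ no_isolated_points op.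

Definition homeomorphism {X : Type} (op : set X -> Prop) (T : X -> X) : Prop :=
  (forall x y, T x = T y -> x = y) /\ (forall y, exists x, T x = y) /\
  (forall U, op U -> op (fun x => U (T x))) /\
  (forall U, op U -> op (fun y => exists x, U x /\ T x = y)).

Definition minimal_system {X : Type} (op : set X -> Prop) (T : X -> X) : Prop :=
  forall F : set X, is_closed op F -> (forall x, F (T x) <-> F x) ->
    (exists x, F x) -> forall x, F x.

Definition minimal_cantor_system {X : Type} (op : set X -> Prop) (T : X -> X) : Prop :=
  cantor_space op /\ homeomorphism op T /\ minimal_system op T.

Definition sigma_algebra {X : Type} (S : set X -> Prop) : Prop :=
  S (fun _ => True) /\ (forall A, S A -> S (fun x => ~ A x)) /\
  (forall A : nat -> set X, (forall i, S (A i)) -> S (fun x => exists i, A i x)).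

Definition borel {X : Type} (op : set X -> Prop) (A : set X) : Prop :=
  forall S : set X -> Prop, sigma_algebra S -> (forall U, op U -> S U) -> S A.

Definition borel_probability {X : Type} (op : set X -> Prop) (mu : set X -> R) : Prop :=
  (forall A, borel op A -> 0 <= mu A) /\ mu (fun _ => True) = 1 /\
  (forall A : nat -> set X, (forall i, borel op (A i)) ->
     (forall i j x, i <> j -> A i x -> A j x -> False) ->
     infinite_sum (fun i => mu (A i)) (mu (fun x => exists i, A i x))).

Definition invariant_probability {X : Type} (op : set X -> Prop) (T : X -> X)
  (mu : set X -> R) : Prop :=
  borel_probability op mu /\
  forall A, borel op A -> mu (fun x => A (T x)) = mu A.

(* Data: C n = number of towers of P(n); towers indexed by 1 <= k <= C n;
   B n k = B_k(n) (the roof piece); h n k = h_k(n).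
   The atom T^{-j} B_k(n) is {x | T^j x \in B_k(n)}. *)
Definition atom {X : Type} (T : X -> X) (B : nat -> nat -> set X)
  (n k j : nat) : set X := fun x => B n k (Nat.iter j T x).

Definition in_range (C : nat -> nat) (h : nat -> nat -> nat) (n k j : nat) : Prop :=
  (1 <= k <= C n)%nat /\ (j < h n k)%nat.

Definition roof {X : Type} (C : nat -> nat) (B : nat -> nat -> set X) (n : nat) : set X :=
  fun x => exists k, (1 <= k <= C n)%nat /\ B n k x.

Definition tower {X : Type} (T : X -> X) (h : nat -> nat -> nat)
  (B : nat -> nat -> set X) (n k : nat) : set X :=
  fun x => exists j, (j < h n k)%nat /\ atom T B n k j x.

Definition CKR_partitions {X : Type} (op : set X -> Prop) (T : X -> X)
  (C : nat -> nat) (h : nat -> nat -> nat) (B : nat -> nat -> set X) : Prop :=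
  (forall n k, (1 <= k <= C n)%nat ->
     is_clopen op (B n k) /\ (exists x, B n k x) /\ (1 <= h n k)%nat) /\
  (forall n k j k' j' x, in_range C h n k j -> in_range C h n k' j' ->
     atom T B n k j x -> atom T B n k' j' x -> k = k' /\ j = j') /\
  (forall n x, exists k j, in_range C h n k j /\ atom T B n k j x) /\
  (C 0%nat = 1%nat /\ h 0%nat 1%nat = 1%nat /\ forall x, B 0%nat 1%nat x).

Definition KR1 {X : Type} (C : nat -> nat) (B : nat -> nat -> set X) : Prop :=
  forall n x, roof C B (S n) x -> roof C B n x.

Definition KR2 {X : Type} (T : X -> X) (C : nat -> nat) (h : nat -> nat -> nat)
  (B : nat -> nat -> set X) : Prop :=
  forall n k j, in_range C h (S n) k j ->
    exists k' j', in_range C h n k' j' /\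
      forall x, atom T B (S n) k j x -> atom T B n k' j' x.

Definition KR3 {X : Type} (C : nat -> nat) (B : nat -> nat -> set X) : Prop :=
  exists x0 : X, forall y, (forall n, roof C B n y) <-> y = x0.

Definition KR4 {X : Type} (op : set X -> Prop) (T : X -> X) (C : nat -> nat)
  (h : nat -> nat -> nat) (B : nat -> nat -> set X) : Prop :=
  forall U x, op U -> U x -> exists n k j, in_range C h n k j /\
    atom T B n k j x /\ forall y, atom T B n k j y -> U y.

Definition KR5 {X : Type} (T : X -> X) (C : nat -> nat) (h : nat -> nat -> nat)
  (B : nat -> nat -> set X) : Prop :=
  forall n k l, (1 <= n)%nat -> (1 <= k <= C (n - 1))%nat -> (1 <= l <= C n)%nat ->
    exists j, (j < h n l)%nat /\
      forall x, atom T B n l j x -> B (n - 1)%nat k x.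

Definition KR6 {X : Type} (C : nat -> nat) (B : nat -> nat -> set X) : Prop :=
  forall n x, (1 <= n)%nat -> roof C B n x -> B (n - 1)%nat 1%nat x.

Definition LR (C : nat -> nat) (h : nat -> nat -> nat) : Prop :=
  exists L : nat, forall n k l, (1 <= n)%nat -> (1 <= k <= C (n - 1))%nat ->
    (1 <= l <= C n)%nat -> (h n l <= L * h (n - 1)%nat k)%nat.

Definition cond_prob {X : Type} (mu : set X -> R) (P Q : set X) : R :=
  mu (fun x => P x /\ Q x) / mu Q.

(* Main.v *)
Require Import Defs.
From Stdlib Require Import Reals Arith Lia Lra.
From Stdlib Require Import Classical ClassicalEpsilon FunctionalExtensionality PropExtensionality.
Open Scope R_scope.

Lemma set_ext {X : Type} (A B : set X) : (forall x, A x <-> B x) -> A = B.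
Proof. intro H; apply functional_extensionality; intro x; apply propositional_extensionality; auto. Qed.

Definition dec (P : Prop) : nat := if excluded_middle_informative P then 1%nat else 0%nat.
Fixpoint cnt (P : nat -> Prop) (n : nat) : nat :=
  match n with 0 => 0%nat | S n => (cnt P n + dec (P n))%nat end.

Lemma cnt_all P n : (forall j, (j < n)%nat -> P j) -> cnt P n = n.
Proof.
  induction n as [|n IH]; intros H; simpl; auto.
  rewrite IH by auto. unfold dec. destruct excluded_middle_informative as [_|N]; [lia|].
  exfalso; apply N, H; lia.
Qed.

Lemma cnt_mono P a b : (a <= b)%nat -> (cnt P a <= cnt P b)%nat.
Proof. induction 1; simpl; lia. Qed.

Lemma cnt_block P j0 a n : (forall i, (i < a)%nat -> P (j0 + i)%nat) -> (j0 + a <= n)%nat ->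
  (a <= cnt P n)%nat.
Proof.
  intros H Hn.
  assert (K : forall a', (a' <= a)%nat -> (a' <= cnt P (j0 + a'))%nat).
  { induction a' as [|a' IH]; intro Ha'. lia.
    replace (j0 + S a')%nat with (S (j0 + a')) by lia. simpl.
    unfold dec. destruct excluded_middle_informative as [_|N].
    - specialize (IH ltac:(lia)); lia.
    - exfalso; apply N, H; lia. }
  specialize (K a (le_n a)). pose proof (cnt_mono P (j0 + a) n Hn). lia.
Qed.

Section Main.
Variable X : Type.
Variable op : set X -> Prop.
Variable T : X -> X.
Variable C : nat -> nat.
Variable h : nat -> nat -> nat.
Variable B : nat -> nat -> set X.
Variable mu : set X -> R.
Variable L : nat.
Hypothesis HopT : forall U, op U -> op (fun x => U (T x)).
Hypothesis Hmu : borel_probability op mu.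
Hypothesis Hinv : forall A, borel op A -> mu (fun x => A (T x)) = mu A.
Hypothesis Hsurj : forall y, exists x, T x = y.
Hypothesis Hckr : CKR_partitions op T C h B.
Hypothesis HKR1 : KR1 C B.
Hypothesis HKR2 : KR2 T C h B.
Hypothesis HKR5 : KR5 T C h B.
Hypothesis HL : forall n k l, (1 <= n)%nat -> (1 <= k <= C (n - 1))%nat ->
    (1 <= l <= C n)%nat -> (h n l <= L * h (n - 1)%nat k)%nat.

Lemma borel_open U : op U -> borel op U.
Proof. intros HU S HS HSU; auto. Qed.
Lemma borel_full : borel op (fun _ => True).
Proof. intros S [H _] _; exact H. Qed.
Lemma borel_compl A : borel op A -> borel op (fun x => ~ A x).
Proof. intros HA S HS HSU. pose proof HS as [_ [H _]]. apply H, HA; auto. Qed.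
Lemma borel_cunion (A : nat -> set X) : (forall i, borel op (A i)) -> borel op (fun x => exists i, A i x).
Proof. intros HA S HS HSU. pose proof HS as [_ [_ H]]. apply H; intro i; apply HA; auto. Qed.
Lemma borel_union A B0 : borel op A -> borel op B0 -> borel op (fun x => A x \/ B0 x).
Proof.
  intros HA HB0.
  replace (fun x => A x \/ B0 x) with (fun x => exists i:nat, (match i with 0 => A | _ => B0 end) x).
  - apply borel_cunion; intros [|i]; auto.
  - apply set_ext; intro x; split.
    + intros [[|i] H]; auto.
    + intros [H|H]; [exists 0%nat | exists 1%nat]; auto.
Qed.
Lemma borel_ext A B0 : (forall x, A x <-> B0 x) -> borel op A -> borel op B0.
Proof. intros H; rewrite (set_ext A B0 H); auto. Qed.
Lemma borel_inter A B0 : borel op A -> borel op B0 -> borel op (fun x => A x /\ B0 x).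
Proof.
  intros HA HB0. apply borel_ext with (fun x => ~ ((~ A x) \/ (~ B0 x))).
  - intro x; tauto.
  - apply borel_compl, borel_union; apply borel_compl; auto.
Qed.
Lemma borel_empty : borel op (fun _ => False).
Proof. apply borel_ext with (fun x => ~ True). tauto. apply borel_compl, borel_full. Qed.
Lemma borel_preT A : borel op A -> borel op (fun x => A (T x)).
Proof.
  intros HA S HS HSU.
  set (S' := fun A : set X => S (fun x => A (T x))).
  change (S' A). apply HA.
  - destruct HS as [H1 [H2 H3]]. split; [|split].
    + exact H1.
    + intros A0 HA0. apply H2 in HA0. exact HA0.
    + intros A0 HA0. unfold S'. apply (H3 (fun i x => A0 i (T x))). exact HA0.
  - intros U HU. apply HSU, HopT, HU.
Qed.
Lemma borel_iter j A : borel op A -> borel op (fun x => A (Nat.iter j T x)).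
Proof.
  revert A; induction j as [|j IH]; intros A HA; simpl; auto.
  apply (IH (fun y => A (T y))). apply borel_preT, HA.
Qed.

Lemma mu_nonneg A : borel op A -> 0 <= mu A.
Proof. intros; apply Hmu; auto. Qed.

Lemma mu_empty : mu (fun _ => False) = 0.
Proof.
  destruct Hmu as [_ [_ H]].
  specialize (H (fun _ _ => False) (fun _ => borel_empty) (fun i j x _ F _ => F)).
  cbv beta in H. replace (fun x : X => exists _ : nat, False) with (fun _ : X => False) in H
    by (apply set_ext; intro; split; [tauto| intros [_ F]; auto]).
  set (c := mu (fun _ => False)) in *.
  assert (Hs : forall n, sum_f_R0 (fun _ => c) n = INR (S n) * c).
  { induction n as [|n IH]. simpl; ring. simpl sum_f_R0. rewrite IH. rewrite !S_INR. ring. }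
  destruct (Req_dec c 0) as [E|E]; auto.
  destruct (H (Rabs c) ltac:(apply Rabs_pos_lt; auto)) as [N HN].
  specialize (HN (S N) ltac:(lia)). rewrite Hs in HN. unfold Rdist in HN.
  assert (E2 : INR (S (S N)) * c - c = INR (S N) * c) by (rewrite (S_INR (S N)); ring).
  rewrite E2 in HN.
  rewrite Rabs_mult in HN. rewrite (Rabs_right (INR (S N))) in HN. 2: apply Rle_ge, pos_INR.
  assert (1 <= INR (S N)) by (rewrite S_INR; pose proof (pos_INR N); lra).
  pose proof (Rabs_pos c). nra.
Qed.

Lemma mu_union2 A B0 : borel op A -> borel op B0 -> (forall x, A x -> B0 x -> False) ->
  mu (fun x => A x \/ B0 x) = mu A + mu B0.
Proof.
  intros HA HB0 HAB.
  destruct Hmu as [_ [_ H]].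
  set (F := fun i : nat => match i with 0 => A | 1 => B0 | _ => fun _ => False end).
  assert (HF : forall i, borel op (F i)) by (intros [|[|i]]; simpl; auto using borel_empty).
  assert (HD : forall i j x, i <> j -> F i x -> F j x -> False).
  { intros [|[|i]] [|[|j]] x Hij; simpl; try tauto; try (intros; eapply HAB; eauto). }
  specialize (H F HF HD).
  replace (fun x => exists i, F i x) with (fun x => A x \/ B0 x) in H.
  2:{ apply set_ext; intro x; split.
      - intros [Hx|Hx]; [exists 0%nat | exists 1%nat]; auto.
      - intros [[|[|i]] Hx]; simpl in Hx; tauto. }
  apply (uniqueness_sum (fun i => mu (F i))); auto.
  assert (Hs : forall n, sum_f_R0 (fun i => mu (F i)) (S n) = mu A + mu B0).
  { induction n as [|n IH]. simpl; ring. rewrite tech5, IH. simpl. rewrite mu_empty; ring. }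
  intros eps Heps. exists 1%nat. intros n Hn. destruct n as [|n]. lia.
  rewrite Hs. unfold Rdist. rewrite Rminus_diag, Rabs_R0. lra.
Qed.

Lemma mu_ext A B0 : (forall x, A x <-> B0 x) -> mu A = mu B0.
Proof. intro H; rewrite (set_ext A B0 H); auto. Qed.

Lemma mu_mono A B0 : borel op A -> borel op B0 -> (forall x, A x -> B0 x) -> mu A <= mu B0.
Proof.
  intros HA HB0 HAB.
  rewrite (mu_ext B0 (fun x => A x \/ (B0 x /\ ~ A x))).
  - rewrite mu_union2; auto.
    + pose proof (mu_nonneg (fun x => B0 x /\ ~ A x)). 
      assert (0 <= mu (fun x => B0 x /\ ~ A x)); [apply H; apply borel_inter; auto using borel_compl|lra].
    + apply borel_inter; auto using borel_compl.
    + intros x H1 [_ H2]; auto.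
  - intro x; split; [intro Hb; destruct (classic (A x)); auto | intros [H|[H _]]; auto].
Qed.

Lemma mu_le1 A : borel op A -> mu A <= 1.
Proof. intros HA. destruct Hmu as [_ [H1 _]]. rewrite <- H1. apply mu_mono; auto using borel_full. Qed.

Lemma mu_iter j A : borel op A -> mu (fun x => A (Nat.iter j T x)) = mu A.
Proof.
  revert A; induction j as [|j IH]; intros A HA; simpl; auto.
  rewrite (IH (fun y => A (T y))). apply Hinv; auto. apply borel_preT; auto.
Qed.

Lemma iter_comp a b x : Nat.iter a T (Nat.iter b T x) = Nat.iter (a+b) T x.
Proof. rewrite Nat.iter_add; auto. Qed.

Lemma iter_surj n y : exists x, Nat.iter n T x = y.
Proof.
  revert y; induction n as [|n IH]; intro y. exists y; auto.
  destruct (Hsurj y) as [y' Hy']. destruct (IH y') as [x Hx]. exists x. simpl. rewrite Hx; auto.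
Qed.

Lemma uniq n k j k' j' x : in_range C h n k j -> in_range C h n k' j' ->
  atom T B n k j x -> atom T B n k' j' x -> k = k' /\ j = j'.
Proof. destruct Hckr as [_ [H _]]. eauto. Qed.

Lemma cover n x : exists k j, in_range C h n k j /\ atom T B n k j x.
Proof. destruct Hckr as [_ [_ [H _]]]. eauto. Qed.

Lemma hpos n k : (1 <= k <= C n)%nat -> (1 <= h n k)%nat.
Proof. destruct Hckr as [H _]. intros Hk; apply H; auto. Qed.

Lemma Bne n k : (1 <= k <= C n)%nat -> exists x, B n k x.
Proof. destruct Hckr as [H _]. intros Hk; apply H; auto. Qed.

Lemma roof_mono m n x : (m <= n)%nat -> roof C B n x -> roof C B m x.
Proof.
  intros Hmn. induction Hmn as [|n Hmn IH]; auto.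
Qed.

Lemma forward p n r j s i x : (p <= n)%nat -> in_range C h p r j -> atom T B p r j x ->
  in_range C h n s i -> atom T B n s i x -> (j <= i)%nat.
Proof.
  intros Hpn Hr Ha Hs Hb.
  destruct (le_lt_dec j i) as [E|E]; auto. exfalso.
  assert (Hroof : roof C B p (Nat.iter i T x)).
  { apply (roof_mono p n); auto. exists s. split. apply Hs. exact Hb. }
  destruct Hroof as [k [Hk Hbk]].
  assert (A1 : atom T B p r (j - i) (Nat.iter i T x)).
  { unfold atom. rewrite iter_comp. replace (j - i + i)%nat with j by lia. exact Ha. }
  assert (A2 : atom T B p k 0 (Nat.iter i T x)) by exact Hbk.
  destruct (uniq p r (j-i) k 0 _ ltac:(destruct Hr; split; auto; lia)
              ltac:(split; auto; pose proof (hpos p k Hk); lia) A1 A2). lia.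
Qed.

Lemma col_inv p n r j tb x : (p <= n)%nat -> (1 <= tb <= C n)%nat ->
  in_range C h p r j -> atom T B p r j x ->
  (tower T h B n tb x <-> tower T h B n tb (Nat.iter j T x)).
Proof.
  intros Hpn Htb Hr Ha. split.
  - intros [i [Hi Hb]].
    assert (E := forward p n r j tb i x Hpn Hr Ha (conj Htb Hi) Hb).
    exists (i - j)%nat. split. lia. unfold atom. rewrite iter_comp.
    replace (i - j + j)%nat with i by lia. exact Hb.
  - intros [i' [Hi' Hb']].
    destruct (cover n x) as [s [i [Hs Hb]]].
    assert (E := forward p n r j s i x Hpn Hr Ha Hs Hb).
    assert (A : atom T B n s (i - j) (Nat.iter j T x)).
    { unfold atom. rewrite iter_comp. replace (i - j + j)%nat with i by lia. exact Hb. }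
    destruct (uniq n s (i-j) tb i' _ ltac:(destruct Hs; split; auto; lia) (conj Htb Hi') A Hb')
      as [-> _].
    exists i. split. apply Hs. exact Hb.
Qed.

Lemma dichot m r j t : (1 <= t <= C m)%nat -> in_range C h (S m) r j ->
  (forall x, atom T B (S m) r j x -> tower T h B m t x) \/
  (forall x, atom T B (S m) r j x -> ~ tower T h B m t x).
Proof.
  intros Ht Hr.
  destruct (HKR2 m r j Hr) as [k' [j' [Hk' Hsub]]].
  destruct (Nat.eq_dec k' t) as [->|Ne].
  - left. intros x Hx. exists j'. split. apply Hk'. auto.
  - right. intros x Hx [i [Hi Hb]].
    destruct (uniq m k' j' t i x Hk' (conj Ht Hi) (Hsub x Hx) Hb). auto.
Qed.

Lemma block m r t : (1 <= t <= C m)%nat -> (1 <= r <= C (S m))%nat ->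
  exists j0, (j0 + h m t <= h (S m) r)%nat /\
    forall i, (i < h m t)%nat -> forall x, atom T B (S m) r (j0 + i) x -> tower T h B m t x.
Proof.
  intros Ht Hr.
  destruct (HKR5 (S m) t r ltac:(lia) ltac:(simpl; rewrite Nat.sub_0_r; exact Ht) Hr) as [j0 [Hj0 Hsub]].
  simpl in Hsub. replace (m - 0)%nat with m in Hsub by lia.
  exists j0. split.
  - assert (Hall : forall i, (i < h m t)%nat -> (j0 + i < h (S m) r)%nat).
    { induction i as [|i IH]; intro Hi. lia.
      specialize (IH ltac:(lia)).
      destruct (lt_dec (j0 + S i) (h (S m) r)) as [E|E]; auto. exfalso.
      destruct (Bne (S m) r Hr) as [u Hu].
      destruct (iter_surj (j0 + i) u) as [w Hw].
      destruct (Hsurj w) as [w' Hw'].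
      assert (Aw : atom T B (S m) r (j0 + i) w) by (unfold atom; rewrite Hw; auto).
      assert (Aw' : atom T B (S m) r j0 (Nat.iter (S i) T w')).
      { unfold atom. rewrite iter_comp. replace (j0 + S i)%nat with (S (j0 + i)) by lia.
        rewrite Nat.iter_succ_r, Hw', Hw. auto. }
      assert (Am : atom T B m t (S i) w') by (apply Hsub; exact Aw').
      destruct (cover (S m) w') as [s [i' [Hs Hb]]].
      destruct i' as [|i''].
      + assert (Hro : roof C B m w').
        { apply (roof_mono m (S m)); auto. exists s. split. apply Hs. exact Hb. }
        destruct Hro as [k [Hk Hbk]].
        destruct (uniq m t (S i) k 0 w' (conj Ht Hi) ltac:(split; auto; pose proof (hpos m k Hk); lia)
          Am Hbk). lia.
      + assert (Aw2 : atom T B (S m) s i'' w).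
        { unfold atom in *. rewrite Nat.iter_succ_r, Hw' in Hb. exact Hb. }
        destruct (uniq (S m) s i'' r (j0+i) w ltac:(destruct Hs; split; auto; lia)
           (conj Hr IH) Aw2 Aw) as [-> ->].
        destruct Hs. lia. }
    destruct (Nat.eq_dec (h m t) 0) as [E|E].
    + pose proof (hpos m t Ht); lia.
    + specialize (Hall (h m t - 1)%nat ltac:(lia)). lia.
  - intros i Hi x Hx. exists i. split; auto. unfold atom.
    apply Hsub. unfold atom in *. rewrite iter_comp. exact Hx.
Qed.

Hypothesis Hne : exists x : X, True.

Fixpoint sumR (f : nat -> R) (n : nat) : R :=
  match n with 0 => 0 | S n => sumR f n + f (S n) end.

Lemma sumR_ext f g n : (forall i, (1 <= i <= n)%nat -> f i = g i) -> sumR f n = sumR g n.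
Proof. induction n as [|n IH]; intro H; simpl; auto. rewrite IH, (H (S n)); auto; intros; try apply H; lia. Qed.
Lemma sumR_scal c f n : sumR (fun i => c * f i) n = c * sumR f n.
Proof. induction n as [|n IH]; simpl. ring. rewrite IH; ring. Qed.
Lemma sumR_plus f g n : sumR (fun i => f i + g i) n = sumR f n + sumR g n.
Proof. induction n as [|n IH]; simpl. ring. rewrite IH; ring. Qed.
Lemma sumR_le f g n : (forall i, (1 <= i <= n)%nat -> f i <= g i) -> sumR f n <= sumR g n.
Proof. induction n as [|n IH]; intro H; simpl. lra. apply Rplus_le_compat; [apply IH; intros; apply H; lia| apply H; lia]. Qed.

Lemma borel_finunion Y A n : borel op Y -> (forall i, (1 <= i <= n)%nat -> borel op (A i)) ->
  borel op (fun x => Y x /\ exists i, (1 <= i <= n)%nat /\ A i x).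
Proof.
  intros HY; induction n as [|n IH]; intro HA.
  - apply borel_ext with (fun _ => False). intro x; split; [tauto|]. intros [_ [i [Hi _]]]; lia.
    apply borel_empty.
  - apply borel_ext with (fun x => (Y x /\ exists i, (1 <= i <= n)%nat /\ A i x) \/ (Y x /\ A (S n) x)).
    + intro x; split.
      * intros [[Hy [i [Hi Ha]]]|[Hy Ha]]; split; auto; [exists i; split; auto; lia| exists (S n); split; auto; lia].
      * intros [Hy [i [Hi Ha]]]. destruct (Nat.eq_dec i (S n)) as [->|Ne]; [right; auto| left; split; auto; exists i; split; auto; lia].
    + apply borel_union. apply IH; intros; apply HA; lia. apply borel_inter; auto. apply HA; lia.
Qed.

Lemma mu_finpart Y A n : borel op Y -> (forall i, (1 <= i <= n)%nat -> borel op (A i)) ->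
  (forall i j x, (1 <= i <= n)%nat -> (1 <= j <= n)%nat -> A i x -> A j x -> i = j) ->
  mu (fun x => Y x /\ exists i, (1 <= i <= n)%nat /\ A i x) = sumR (fun i => mu (fun x => Y x /\ A i x)) n.
Proof.
  intros HY; induction n as [|n IH]; intros HA HD; simpl.
  - rewrite <- mu_empty. apply mu_ext. intro x; split; [|tauto]. intros [_ [i [Hi _]]]; lia.
  - rewrite <- IH by (intros; try apply HA; try eapply HD; eauto; lia).
    rewrite <- mu_union2.
    + apply mu_ext. intro x; split.
      * intros [Hy [i [Hi Ha]]]. destruct (Nat.eq_dec i (S n)) as [->|Ne]; [right; auto| left; split; auto; exists i; split; auto; lia].
      * intros [[Hy [i [Hi Ha]]]|[Hy Ha]]; split; auto; [exists i; split; auto; lia| exists (S n); split; auto; lia].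
    + apply borel_finunion; auto. intros; apply HA; lia.
    + apply borel_inter; auto. apply HA; lia.
    + intros x [_ [i [Hi Ha]]] [_ Hb]. assert (i = S n) by (apply (HD i (S n) x); auto; lia). lia.
Qed.

Lemma mu_part Y A n : borel op Y -> (forall i, (1 <= i <= n)%nat -> borel op (A i)) ->
  (forall i j x, (1 <= i <= n)%nat -> (1 <= j <= n)%nat -> A i x -> A j x -> i = j) ->
  (forall x, exists i, (1 <= i <= n)%nat /\ A i x) ->
  mu Y = sumR (fun i => mu (fun x => Y x /\ A i x)) n.
Proof.
  intros HY HA HD HC. rewrite <- mu_finpart; auto. apply mu_ext. intro x; split; [|tauto].
  intro; split; auto.
Qed.

Lemma borel_B n k : (1 <= k <= C n)%nat -> borel op (B n k).
Proof. destruct Hckr as [H _]. intro Hk. apply borel_open. apply (H n k Hk). Qed.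
Lemma borel_atom n k j : (1 <= k <= C n)%nat -> borel op (atom T B n k j).
Proof. intro Hk. apply borel_iter, borel_B, Hk. Qed.
Lemma borel_ptower n k h' : (1 <= k <= C n)%nat ->
  borel op (fun x => exists j, (j < h')%nat /\ atom T B n k j x).
Proof.
  intro Hk. apply borel_cunion. intro j. destruct (lt_dec j h') as [E|E].
  - apply borel_ext with (atom T B n k j). intro; tauto. apply borel_atom, Hk.
  - apply borel_ext with (fun _ => False). intro; tauto. apply borel_empty.
Qed.
Lemma borel_tower n k : (1 <= k <= C n)%nat -> borel op (tower T h B n k).
Proof. apply borel_ptower. Qed.

Lemma tower_disj n i j x : (1 <= i <= C n)%nat -> (1 <= j <= C n)%nat ->
  tower T h B n i x -> tower T h B n j x -> i = j.
Proof. unfold tower. intros Hi Hj [a [Ha Hxa]] [b [Hb Hxb]]. destruct (uniq n i a j b x) as [E _]; auto; split; auto. Qed.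
Lemma tower_cover n x : exists i, (1 <= i <= C n)%nat /\ tower T h B n i x.
Proof. destruct (cover n x) as [k [j [[Hk Hj] Ha]]]. exists k; split; auto. exists j; auto. Qed.

Lemma L1 p r Sg U : (1 <= r <= C p)%nat -> borel op Sg -> borel op U ->
  (forall j x, (j < h p r)%nat -> atom T B p r j x -> (Sg x <-> Sg (Nat.iter j T x))) ->
  (forall j, (j < h p r)%nat -> (forall x, atom T B p r j x -> U x) \/ (forall x, atom T B p r j x -> ~ U x)) ->
  mu (fun x => Sg x /\ tower T h B p r x /\ U x) =
  INR (cnt (fun j => forall x, atom T B p r j x -> U x) (h p r)) * mu (fun x => Sg x /\ B p r x).
Proof.
  intros Hr HS HU Hcol Hdi.
  set (P := fun j => forall x, atom T B p r j x -> U x).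
  assert (K : forall h', (h' <= h p r)%nat ->
    mu (fun x => Sg x /\ (exists j, (j < h')%nat /\ atom T B p r j x) /\ U x) =
    INR (cnt P h') * mu (fun x => Sg x /\ B p r x)).
  { induction h' as [|h' IH]; intro Hh.
    - simpl. rewrite Rmult_0_l. rewrite <- mu_empty. apply mu_ext. intro x; split; [|tauto].
      intros [_ [[j [Hj _]] _]]; lia.
    - rewrite (mu_ext _ (fun x => (Sg x /\ (exists j, (j < h')%nat /\ atom T B p r j x) /\ U x) \/
                                  (Sg x /\ atom T B p r h' x /\ U x))).
      2:{ intro x; split.
          - intros [Hs [[j [Hj Ha]] Hu]]. destruct (Nat.eq_dec j h') as [->|Ne]; [right; auto| left; repeat split; auto; exists j; split; auto; lia].
          - intros [[Hs [[j [Hj Ha]] Hu]]|[Hs [Ha Hu]]]; repeat split; auto; [exists j; split; auto; lia| exists h'; split; auto; lia]. }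
      rewrite mu_union2.
      + rewrite IH by lia. simpl cnt. rewrite plus_INR. unfold dec.
        destruct excluded_middle_informative as [Pp|Np].
        * rewrite (mu_ext (fun x => Sg x /\ atom T B p r h' x /\ U x) (fun x => (fun y => Sg y /\ B p r y) (Nat.iter h' T x))).
          -- rewrite (mu_iter h' (fun y => Sg y /\ B p r y)). simpl. ring. apply borel_inter; auto. apply borel_B; auto.
          -- intro x; split.
             ++ intros [Hs [Ha Hu]]. split; auto. apply (Hcol h' x); auto; lia.
             ++ intros [Hs Hb]. assert (Ha : atom T B p r h' x) by exact Hb.
                repeat split; auto. apply (Hcol h' x); auto; lia.
        * rewrite (mu_ext (fun x => Sg x /\ atom T B p r h' x /\ U x) (fun _ => False)), mu_empty. simpl; ring.
          intro x; split; [|tauto]. intros [Hs [Ha Hu]].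
          destruct (Hdi h' ltac:(lia)) as [H1|H1]. apply Np; exact H1. apply (H1 x Ha Hu).
      + apply borel_inter; auto. apply borel_inter; auto. apply borel_ptower; auto.
      + apply borel_inter; auto. apply borel_inter; auto. apply borel_atom; auto.
      + intros x [_ [[j [Hj Ha]] _]] [_ [Hb _]].
        destruct (uniq p r j r h' x ltac:(split; auto; lia) ltac:(split; auto; lia) Ha Hb). lia. }
  apply K; auto.
Qed.
Lemma Cpos m : (1 <= C m)%nat.
Proof. destruct Hne as [x _]. destruct (tower_cover m x) as [i [Hi _]]. lia. Qed.

Lemma Lpos : (1 <= L)%nat.
Proof.
  assert (H := HL 1 1 1 (le_n 1) ltac:(simpl; pose proof (Cpos 0); lia) ltac:(pose proof (Cpos 1); lia)).
  pose proof (hpos 1 1 ltac:(pose proof (Cpos 1); lia)).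
  destruct L; lia.
Qed.

Lemma mu_full : mu (fun _ => True) = 1.
Proof. apply Hmu. Qed.

Lemma I_S n tb p r : (p <= n)%nat -> (1 <= tb <= C n)%nat -> (1 <= r <= C p)%nat ->
  mu (fun x => tower T h B n tb x /\ tower T h B p r x) =
  INR (h p r) * mu (fun x => tower T h B n tb x /\ B p r x).
Proof.
  intros Hpn Htb Hr.
  rewrite (mu_ext _ (fun x => tower T h B n tb x /\ tower T h B p r x /\ (fun _ => True) x)) by (intro; tauto).
  rewrite L1; auto.
  - rewrite cnt_all; auto.
  - apply borel_tower; auto.
  - apply borel_full.
  - intros j x Hj Ha. apply (col_inv p n r j tb x); auto. split; auto.
Qed.

Lemma I_full p r : (1 <= r <= C p)%nat -> mu (tower T h B p r) = INR (h p r) * mu (B p r).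
Proof.
  intros Hr.
  rewrite (mu_ext _ (fun x => (fun _ => True) x /\ tower T h B p r x /\ (fun _ => True) x)) by (intro; tauto).
  rewrite L1; auto.
  - rewrite cnt_all; auto. f_equal. apply mu_ext; tauto.
  - apply borel_full.
  - apply borel_full.
  - intros; tauto.
Qed.

Definition Nc m r t := cnt (fun j => forall x, atom T B (S m) r j x -> tower T h B m t x) (h (S m) r).

Lemma I2 Sg m r t : borel op Sg -> (1 <= t <= C m)%nat -> (1 <= r <= C (S m))%nat ->
  (forall j x, (j < h (S m) r)%nat -> atom T B (S m) r j x -> (Sg x <-> Sg (Nat.iter j T x))) ->
  mu (fun x => (Sg x /\ tower T h B m t x) /\ tower T h B (S m) r x) =
  INR (Nc m r t) * mu (fun x => Sg x /\ B (S m) r x).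
Proof.
  intros HS Ht Hr Hcol.
  rewrite (mu_ext _ (fun x => Sg x /\ tower T h B (S m) r x /\ tower T h B m t x)) by (intro; tauto).
  rewrite L1; auto.
  - apply borel_tower; auto.
  - intros j Hj. apply dichot; auto. split; auto.
Qed.

Lemma N_ge m r t : (1 <= t <= C m)%nat -> (1 <= r <= C (S m))%nat -> (h m t <= Nc m r t)%nat.
Proof.
  intros Ht Hr. destruct (block m r t Ht Hr) as [j0 [Hj0 Hin]].
  apply (cnt_block _ j0); auto.
Qed.

Lemma sum_q p : sumR (fun r => mu (tower T h B p r)) (C p) = 1.
Proof.
  rewrite <- mu_full.
  rewrite (mu_part (fun _ => True) (tower T h B p) (C p)).
  - apply sumR_ext. intros; apply mu_ext; tauto.
  - apply borel_full.
  - intros; apply borel_tower; auto.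
  - intros; eapply tower_disj; eauto.
  - apply tower_cover.
Qed.

Lemma q_split m t : (1 <= t <= C m)%nat ->
  mu (tower T h B m t) = sumR (fun r => INR (Nc m r t) * mu (B (S m) r)) (C (S m)).
Proof.
  intros Ht.
  rewrite (mu_part (tower T h B m t) (tower T h B (S m)) (C (S m))).
  - apply sumR_ext. intros r Hr.
    rewrite (mu_ext _ (fun x => ((fun _ => True) x /\ tower T h B m t x) /\ tower T h B (S m) r x)) by (intro; tauto).
    rewrite I2; auto. f_equal. apply mu_ext; tauto. apply borel_full. intros; tauto.
  - apply borel_tower; auto.
  - intros; apply borel_tower; auto.
  - intros; eapply tower_disj; eauto.
  - apply tower_cover.
Qed.

Lemma RL_pos : 0 < INR L.
Proof. pose proof Lpos. apply lt_0_INR; lia. Qed.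

Lemma q_pos m t : (1 <= t <= C m)%nat -> / INR L <= mu (tower T h B m t).
Proof.
  intros Ht. rewrite q_split; auto.
  pose proof RL_pos.
  apply Rle_trans with (sumR (fun r => / INR L * mu (tower T h B (S m) r)) (C (S m))).
  - rewrite sumR_scal, sum_q. lra.
  - apply sumR_le. intros r Hr. rewrite I_full; auto.
    pose proof (N_ge m r t Ht Hr) as H1. apply le_INR in H1.
    pose proof (HL (S m) t r ltac:(lia) ltac:(simpl; rewrite Nat.sub_0_r; auto) Hr) as H2.
    simpl in H2. rewrite Nat.sub_0_r in H2. apply le_INR in H2. rewrite mult_INR in H2.
    assert (HB0 : 0 <= mu (B (S m) r)) by (apply mu_nonneg, borel_B; auto).
    assert (INR (h (S m) r) * / INR L <= INR (Nc m r t)).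
    { apply Rle_trans with (INR (h m t)); auto.
      apply Rmult_le_reg_r with (INR L); auto. rewrite Rmult_assoc, Rinv_l by lra. nra. }
    nra.
Qed.

Lemma muB_pos p r : (1 <= r <= C p)%nat -> 0 < mu (B p r).
Proof.
  intros Hr. pose proof (q_pos p r Hr). rewrite I_full in H; auto.
  pose proof RL_pos. assert (0 < / INR L) by (apply Rinv_0_lt_compat; auto).
  assert (HB0 : 0 <= mu (B p r)) by (apply mu_nonneg, borel_B; auto).
  destruct HB0 as [|E]; auto. rewrite <- E in H. lra.
Qed.

Lemma sumR_minus f g n : sumR (fun i => f i - g i) n = sumR f n - sumR g n.
Proof. induction n as [|n IH]; simpl. ring. rewrite IH; ring. Qed.

Lemma doeblin_step K (w pi g : nat -> R) eps a b :
  0 <= eps <= 1 -> (forall r, (1 <= r <= K)%nat -> eps * pi r <= w r) ->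
  sumR w K = 1 -> sumR pi K = 1 -> (forall r, (1 <= r <= K)%nat -> a <= g r <= b) ->
  eps * sumR (fun r => pi r * g r) K + (1 - eps) * a <= sumR (fun r => w r * g r) K <=
  eps * sumR (fun r => pi r * g r) K + (1 - eps) * b.
Proof.
  intros He Hw Sw Sp Hg.
  assert (D : sumR (fun r => w r * g r) K = eps * sumR (fun r => pi r * g r) K +
               sumR (fun r => (w r - eps * pi r) * g r) K).
  { rewrite <- sumR_scal, <- sumR_plus. apply sumR_ext; intros; ring. }
  assert (D2 : sumR (fun r => (w r - eps * pi r)) K = 1 - eps).
  { rewrite sumR_minus, sumR_scal, Sw, Sp; ring. }
  rewrite D. split.
  - apply Rplus_le_compat_l. rewrite <- D2, Rmult_comm, <- sumR_scal.
    apply sumR_le. intros r Hr. specialize (Hw r Hr). specialize (Hg r Hr). nra.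
  - apply Rplus_le_compat_l. rewrite <- D2, Rmult_comm, <- sumR_scal.
    apply sumR_le. intros r Hr. specialize (Hw r Hr). specialize (Hg r Hr). nra.
Qed.
Definition fq n tb m t := mu (fun x => tower T h B n tb x /\ tower T h B m t x) / mu (tower T h B m t).

Lemma step_formula n tb m t : (S m <= n)%nat -> (1 <= tb <= C n)%nat -> (1 <= t <= C m)%nat ->
  fq n tb m t = sumR (fun r => (INR (Nc m r t) * mu (B (S m) r) / mu (tower T h B m t)) * fq n tb (S m) r) (C (S m)).
Proof.
  intros Hmn Htb Ht. unfold fq.
  rewrite (mu_part (fun x => tower T h B n tb x /\ tower T h B m t x) (tower T h B (S m)) (C (S m))).
  - assert (Hq : 0 < mu (tower T h B m t)) by (pose proof (q_pos m t Ht); pose proof RL_pos;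
       assert (0 < / INR L) by (apply Rinv_0_lt_compat; auto); lra).
    unfold Rdiv at 1. rewrite Rmult_comm, <- sumR_scal. apply sumR_ext. intros r Hr.
    rewrite I2; auto.
    + rewrite I_S, (I_full (S m) r); auto; try lia.
      pose proof (muB_pos (S m) r Hr). pose proof (hpos (S m) r Hr) as Hh.
      assert (0 < INR (h (S m) r)) by (apply lt_0_INR; lia).
      field. repeat split; lra.
    + apply borel_tower; auto.
    + intros j x Hj Ha. apply (col_inv (S m) n r j tb x); auto. split; auto.
  - apply borel_inter; apply borel_tower; auto.
  - intros; apply borel_tower; auto.
  - intros; eapply tower_disj; eauto.
  - apply tower_cover.
Qed.

Lemma fq_01 n tb m t : (1 <= tb <= C n)%nat -> (1 <= t <= C m)%nat -> 0 <= fq n tb m t <= 1.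
Proof.
  intros Htb Ht. unfold fq.
  assert (Hq : 0 < mu (tower T h B m t)) by (pose proof (q_pos m t Ht); pose proof RL_pos;
       assert (0 < / INR L) by (apply Rinv_0_lt_compat; auto); lra).
  assert (H0 : 0 <= mu (fun x => tower T h B n tb x /\ tower T h B m t x))
    by (apply mu_nonneg, borel_inter; apply borel_tower; auto).
  assert (H1 : mu (fun x => tower T h B n tb x /\ tower T h B m t x) <= mu (tower T h B m t))
    by (apply mu_mono; [apply borel_inter; apply borel_tower; auto| apply borel_tower; auto| tauto]).
  split.
  - unfold Rdiv. apply Rmult_le_pos; auto. left; apply Rinv_0_lt_compat; auto.
  - unfold Rdiv. apply Rmult_le_reg_r with (mu (tower T h B m t)); auto.
    rewrite Rmult_assoc, Rinv_l by lra. lra.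
Qed.

Definition eps := / INR L.

Lemma eps_range : 0 < eps <= 1.
Proof.
  unfold eps. pose proof Lpos as H. apply le_INR in H. simpl in H. split.
  apply Rinv_0_lt_compat; lra.
  rewrite <- Rinv_1. apply Rinv_le_contravar; lra.
Qed.

Lemma main_bound n tb : (1 <= tb <= C n)%nat -> forall k, (k <= n)%nat ->
  exists a b, b - a <= (1 - eps) ^ k /\
    forall t, (1 <= t <= C (n - k))%nat -> a <= fq n tb (n - k) t <= b.
Proof.
  intros Htb. induction k as [|k IH]; intro Hk.
  - exists 0, 1. split. simpl; lra. intros t Ht. rewrite Nat.sub_0_r in *. apply fq_01; auto.
  - destruct (IH ltac:(lia)) as [a [b [Hab Hg]]].
    set (m := (n - S k)%nat).
    assert (Em : (n - k)%nat = S m) by (unfold m; lia).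
    rewrite Em in Hg.
    pose proof eps_range as He.
    set (A := sumR (fun r => mu (tower T h B (S m) r) * fq n tb (S m) r) (C (S m))).
    exists (eps * A + (1 - eps) * a), (eps * A + (1 - eps) * b). split.
    + simpl. replace (eps * A + (1 - eps) * b - (eps * A + (1 - eps) * a)) with ((1 - eps) * (b - a)) by ring.
      apply Rmult_le_compat_l; lra.
    + intros t Ht. fold m in Ht.
      assert (Hq : / INR L <= mu (tower T h B m t)) by (apply q_pos; auto).
      assert (Hq1 : mu (tower T h B m t) <= 1) by (apply mu_le1, borel_tower; auto).
      assert (Hqp : 0 < mu (tower T h B m t)) by (fold eps in Hq; lra).
      rewrite step_formula; auto; [|unfold m; lia].
      apply doeblin_step; auto.
      * lra.
      * intros r Hr. rewrite I_full; auto.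
        pose proof (N_ge m r t Ht Hr) as H1. apply le_INR in H1.
        pose proof (HL (S m) t r ltac:(lia) ltac:(simpl; rewrite Nat.sub_0_r; auto) Hr) as H2.
        simpl in H2. rewrite Nat.sub_0_r in H2. apply le_INR in H2. rewrite mult_INR in H2.
        pose proof (muB_pos (S m) r Hr) as HB0. pose proof RL_pos.
        assert (E1 : eps * INR (h (S m) r) <= INR (Nc m r t)).
        { apply Rle_trans with (INR (h m t)); auto. unfold eps.
          apply Rmult_le_reg_l with (INR L); auto. rewrite <- Rmult_assoc, Rinv_r by lra. lra. }
        assert (E2 : INR (Nc m r t) * mu (B (S m) r) <= INR (Nc m r t) * mu (B (S m) r) / mu (tower T h B m t)).
        { unfold Rdiv. rewrite <- (Rmult_1_r (INR (Nc m r t) * mu (B (S m) r))) at 1.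
          apply Rmult_le_compat_l. apply Rmult_le_pos; [apply pos_INR|lra].
          rewrite <- Rinv_1. apply Rinv_le_contravar; lra. }
        nra.
      * unfold Rdiv. 
        rewrite (sumR_ext _ (fun r => / mu (tower T h B m t) * (INR (Nc m r t) * mu (B (S m) r)))) by (intros; ring).
        rewrite sumR_scal, <- q_split by auto. field. lra.
      * apply sum_q.
Qed.

Lemma final n tb k t : (k <= n)%nat -> (1 <= t <= C (n - k))%nat -> (1 <= tb <= C n)%nat ->
  Rabs (fq n tb (n - k) t - mu (tower T h B n tb)) <= (1 - eps) ^ k.
Proof.
  intros Hk Ht Htb.
  destruct (main_bound n tb Htb k Hk) as [a [b [Hab Hg]]].
  set (m := (n - k)%nat) in *.
  assert (Hsum : mu (tower T h B n tb) = sumR (fun s => mu (tower T h B m s) * fq n tb m s) (C m)).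
  { rewrite (mu_part (tower T h B n tb) (tower T h B m) (C m)).
    - apply sumR_ext. intros s Hs. unfold fq.
      assert (Hq : 0 < mu (tower T h B m s)) by (pose proof (q_pos m s Hs); pose proof RL_pos;
         assert (0 < / INR L) by (apply Rinv_0_lt_compat; auto); lra).
      field. lra.
    - apply borel_tower; auto.
    - intros; apply borel_tower; auto.
    - intros; eapply tower_disj; eauto.
    - apply tower_cover. }
  assert (Ha : a <= mu (tower T h B n tb)).
  { rewrite Hsum. rewrite <- (Rmult_1_l a), <- (sum_q m), Rmult_comm, <- sumR_scal.
    apply sumR_le. intros s Hs. specialize (Hg s Hs).
    assert (0 <= mu (tower T h B m s)) by (apply mu_nonneg, borel_tower; auto). nra. }
  assert (Hb : mu (tower T h B n tb) <= b).
  { rewrite Hsum. rewrite <- (Rmult_1_l b), <- (sum_q m), Rmult_comm, <- sumR_scal.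
    apply sumR_le. intros s Hs. specialize (Hg s Hs).
    assert (0 <= mu (tower T h B m s)) by (apply mu_nonneg, borel_tower; auto). nra. }
  specialize (Hg t Ht). apply Rabs_le. lra.
Qed.
End Main.

Theorem mainTheorem4 (X : Type) (op : set X -> Prop) (T : X -> X)
  (C : nat -> nat) (h : nat -> nat -> nat) (B : nat -> nat -> set X)
  (mu : set X -> R) :
  minimal_cantor_system op T ->
  CKR_partitions op T C h B ->
  KR1 C B -> KR2 T C h B -> KR3 C B -> KR4 op T C h B ->
  KR5 T C h B -> KR6 C B -> LR C h ->
  invariant_probability op T mu ->
  (forall nu, invariant_probability op T nu -> forall A, borel op A -> nu A = mu A) ->
  exists c beta : R, 0 <= c /\ 0 <= beta < 1 /\
    forall n k t tb : nat, (k <= n)%nat ->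
      (1 <= t <= C (n - k))%nat -> (1 <= tb <= C n)%nat ->
      Rabs (cond_prob mu (tower T h B n tb) (tower T h B (n - k) t)
            - mu (tower T h B n tb)) <= c * beta ^ k.
Proof.
  intros [Hcantor [Hhom Hmin]] Hckr HKR1 HKR2 HKR3 HKR4 HKR5 HKR6 [L HL] [Hmu Hinv] Huniq.
  destruct Hcantor as [_ [Hne _]].
  destruct Hhom as [_ [Hsurj [HopT _]]].
  pose proof (eps_range X op T C h B L Hckr HL Hne) as He.
  exists 1, (1 - eps L). split; [lra|]. split; [lra|].
  intros n k t tb Hk Ht Htb. rewrite Rmult_1_l.
  exact (final X op T C h B mu L HopT Hmu Hinv Hsurj Hckr HKR1 HKR2 HKR5 HL Hne n tb k t Hk Ht Htb).
Qed.
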